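(* Let $G$ be an infinite group and $S$ any finite generating set of $G$ (with $S=S^{-1}$, $e\notin S$). Then the average curvature over the ball of radius $n$ tends to zero: $$\lim_{n\to\infty}\frac{1}{|B_n|}\sum_{g\in B_n\smallsetminus\{e\}}\kappa(g)=0.$$
   Context: For a group $G$ with finite generating set $S$ ($S=S^{-1}$, $e\notin S$), $|x|$ denotes word length, $B_n=\{g\in G:|g|\le n\}$, $\mathrm{Av}(g)=\frac{1}{|S|}\sum_{a\in S}|a^{-1}ga|$, and for $g\neq e$ the curvature is $\kappa(g)=\frac{|g|-\mathrm{Av}(g)}{|g|}$. *)

(* Defs.v *)
From HB Require Import structures.
From mathcomp Require Import all_boot all_order all_algebra.
From mathcomp Require Import all_classical all_reals all_analysis.
Set Implicit Arguments. Unset Strict Implicit. Unset Printing Implicit Defensive.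
Import Order.TTheory GRing.Theory Num.Theory.

Section WordMetric.
Variable G : groupType.

Definition wprod (w : seq G) : G := \big[@monoid.mul G/@monoid.one G]_(a <- w) a.

Fixpoint words (S : seq G) (k : nat) : seq (seq G) :=
  if k is k'.+1 then [seq a :: w | a <- S, w <- words S k'] else [:: [::]].

Definition sym_gen_set (S : seq G) : Prop :=
  [/\ uniq S,
      (forall a, a \in S -> (@monoid.inv G a) \in S),
      (@monoid.one G) \notin S &
      (forall g : G, exists w : seq G, all (mem S) w /\ wprod w = g)].

Definition infinite_group : Prop := ~ (exists s : seq G, forall g : G, g \in s).

(* word length |g| : least n such that g is a product of n letters of S
   (0 if g is not in the generated subgroup, which never happens for
   a generating set) *)
Definition wlen (S : seq G) (g : G) : nat :=
  match pselect (exists n, g \in [seq wprod w | w <- words S n]) with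
  | left h => ex_minn h
  | right _ => 0%N
  end.

Definition ball (S : seq G) (n : nat) : seq G :=
  undup [seq wprod w | w <- flatten [seq words S k | k <- iota 0 n.+1]].

Variable R : realType.
Local Open Scope ring_scope.

Definition Av (S : seq G) (g : G) : R :=
  (size S)%:R^-1 * \sum_(a <- S) (wlen S (@monoid.mul G (@monoid.mul G (@monoid.inv G a) g) a))%:R.

Definition curv (S : seq G) (g : G) : R :=
  ((wlen S g)%:R - Av S g) / (wlen S g)%:R.

Definition avg_curv (S : seq G) (n : nat) : R :=
  (size (ball S n))%:R^-1 * \sum_(g <- ball S n | g != @monoid.one G) curv S g.

End WordMetric.

(* Main.v *)
Require Import Defs.
From HB Require Import structures.
From mathcomp Require Import all_boot all_order all_algebra.
From mathcomp Require Import all_classical all_reals all_analysis.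
From mathcomp Require Import zify ring lra.
Import Order.TTheory GRing.Theory Num.Theory numFieldNormedType.Exports.
Set Implicit Arguments. Unset Strict Implicit. Unset Printing Implicit Defensive.

Section Comb.
Variable G : groupType.
Variable S : seq G.
Hypothesis Sinv : forall a, a \in S -> (@monoid.inv G a) \in S.
Hypothesis gen : forall g : G, exists w : seq G, all (mem S) w /\ wprod w = g.

Local Notation mul := (@monoid.mul G).
Local Notation one := (@monoid.one G).
Local Notation inv := (@monoid.inv G).

Lemma wprod_nil : wprod [::] = one.
Proof. by rewrite /wprod big_nil. Qed.

Lemma wprod_cons a w : wprod (a :: w) = mul a (wprod w).
Proof. by rewrite /wprod big_cons. Qed.

Lemma wprod_cat w1 w2 : wprod (w1 ++ w2) = mul (wprod w1) (wprod w2).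
Proof.
elim: w1 => [|a w IH] /=; first by rewrite wprod_nil monoid.mul1g.
by rewrite !wprod_cons IH monoid.mulgA.
Qed.

Lemma mem_words k w : (w \in words S k) = all (mem S) w && (size w == k).
Proof.
elim: k w => [|k IH] [|a w] //=.
- by rewrite inE andbF.
- by apply/negbTE/allpairsP => -[[x y] [_ _]].
- rewrite eqSS; apply/allpairsP/andP => [[[x y] [/= Hx Hy [Ex Ey]]]|[/andP[Ha Hall] Hw]].
    rewrite Ex Ey; have Hy' : y \in words S k by exact: Hy.
    move: Hy'; rewrite IH => /andP[-> ->]; by rewrite Hx.
  have H : w \in words S k by rewrite IH Hall Hw.
  exists (a, w); split => //=.
Qed.

Lemma wlen_spec g : exists w, w \in words S (wlen S g) /\ wprod w = g.
Proof.
rewrite /wlen; case: pselect => [h|nh].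
  case: ex_minnP => m /mapP [w Hw ->] _; by exists w.
exfalso; apply: nh; have [w [Hw <-]] := gen g.
exists (size w); apply/mapP; exists w => //; by rewrite mem_words Hw eqxx.
Qed.

Lemma wlen_min g k w : w \in words S k -> wprod w = g -> (wlen S g <= k)%N.
Proof.
move=> Hw Hg; rewrite /wlen; case: pselect => [h|nh].
  case: ex_minnP => m _; apply; apply/mapP; by exists w.
exfalso; apply: nh; exists k; apply/mapP; by exists w.
Qed.

Lemma wlen_mul x y : (wlen S (mul x y) <= wlen S x + wlen S y)%N.
Proof.
have [w1 [H1 E1]] := wlen_spec x; have [w2 [H2 E2]] := wlen_spec y.
apply: (@wlen_min _ _ (w1 ++ w2)); last by rewrite wprod_cat E1 E2.
move: H1 H2; rewrite !mem_words all_cat size_cat => /andP[-> /eqP ->] /andP[-> /eqP ->].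
by rewrite eqxx.
Qed.

Lemma wlen_S a : a \in S -> (wlen S a <= 1)%N.
Proof.
move=> Ha; apply: (@wlen_min _ _ [:: a]).
  by rewrite mem_words /= Ha.
by rewrite wprod_cons wprod_nil monoid.mulg1.
Qed.

Lemma wlen_one : wlen S one = 0%N.
Proof. apply/eqP; rewrite -leqn0; apply: (@wlen_min _ _ [::]) => //; exact: wprod_nil. Qed.

Lemma wlen_conj1 a g : a \in S -> (wlen S (mul (mul (inv a) g) a) <= wlen S g + 2)%N.
Proof.
move=> Ha.
apply: (leq_trans (wlen_mul _ _)).
have := wlen_S Ha; have := wlen_S (Sinv Ha); have := wlen_mul (inv a) g.
lia.
Qed.

Lemma wlen_conj2 a g : a \in S -> (wlen S g <= wlen S (mul (mul (inv a) g) a) + 2)%N.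
Proof.
move=> Ha.
have E : mul (mul a (mul (mul (inv a) g) a)) (inv a) = g.
  by rewrite monoid.mulgA monoid.mulgK monoid.mulVKg.
rewrite -{1}E.
apply: (leq_trans (wlen_mul _ _)).
have := wlen_S Ha; have := wlen_S (Sinv Ha); have := wlen_mul a (mul (mul (inv a) g) a).
lia.
Qed.

Lemma mem_ball n g : (g \in Defs.ball S n) = (wlen S g <= n)%N.
Proof.
rewrite /Defs.ball mem_undup; apply/mapP/idP => [[w /flatten_mapP [k Hk Hw] ->]|Hg].
  move: Hk; rewrite mem_iota add0n ltnS => Hk.
  exact: leq_trans (wlen_min Hw erefl) Hk.
have [w [Hw Hwg]] := wlen_spec g.
exists w => //; apply/flatten_mapP; exists (wlen S g) => //.
by rewrite mem_iota add0n ltnS.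
Qed.

Lemma ball_uniq n : uniq (Defs.ball S n).
Proof. exact: undup_uniq. Qed.

Hypothesis inf : infinite_group G.

Lemma sphere_nonempty n : exists g, wlen S g = n.+1.
Proof.
case: (pselect (exists g, wlen S g = n.+1)) => // nh; exfalso.
have key : forall m g, (wlen S g <= m)%N -> (wlen S g <= n)%N.
  elim=> [|m IH] g Hg; first by move: Hg; rewrite leqn0 => /eqP ->.
  case: (leqP (wlen S g) m) => Hm; first exact: IH.
  have Heq : wlen S g = m.+1 by apply/eqP; rewrite eqn_leq Hg Hm.
  have [w [Hw Hwg]] := wlen_spec g.
  rewrite Heq in Hw; move: Hw; rewrite mem_words; case: w Hwg => [|a w'] Hwg; first by rewrite andbF.
  move=> /= /andP [/andP [Ha Hall] Hs].
  have Hw' : w' \in words S m by rewrite mem_words Hall.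
  have H1 := IH _ (wlen_min Hw' erefl).
  have H2 : (wlen S g <= n.+1)%N.
    rewrite -Hwg wprod_cons; apply: leq_trans (wlen_mul _ _) _.
    have := wlen_S Ha; lia.
  move: H2; rewrite leq_eqVlt ltnS => /orP [/eqP H|//].
  by exfalso; apply: nh; exists g.
have [] := inf; exists (Defs.ball S n) => x; rewrite mem_ball; exact: (key _ _ (leqnn _)).
Qed.

Lemma ball_size n : (n < size (Defs.ball S n))%N.
Proof.
elim: n => [|n IH].
  have : one \in Defs.ball S 0 by rewrite mem_ball wlen_one.
  by case: (Defs.ball S 0).
have [g Hg] := sphere_nonempty n.
have H : (size (g :: Defs.ball S n) <= size (Defs.ball S n.+1))%N.
  apply: uniq_leq_size.
    by rewrite /= ball_uniq mem_ball Hg ltnn.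
  move=> x; rewrite inE mem_ball => /orP [/eqP ->|Hx]; rewrite mem_ball ?Hg //.
  exact: leqW.
by apply: leq_trans H; rewrite /= ltnS.
Qed.

Lemma S_nonempty : (0 < size S)%N.
Proof.
case: S gen => [|//] gen0; exfalso; move: inf; rewrite /infinite_group; apply; exists [:: one] => g.
have [[|a w] [Hw <-]] := gen0 g; first by rewrite wprod_nil inE.
by [].
Qed.

End Comb.

Local Open Scope classical_set_scope.
Local Open Scope ring_scope.

Section Real.
Variable R : realType.

Lemma sum_const_seq (T : Type) (s : seq T) (c : R) : \sum_(x <- s) c = c *+ size s.
Proof. elim: s => [|x s IH]; by rewrite ?big_nil ?big_cons ?IH ?mulrS. Qed.

Lemma sum_split_count (T : Type) (s : seq T) (P : pred T) (c : R) :
  \sum_(x <- s) (2 * (P x)%:R + c) = 2 * (count P s)%:R + c * (size s)%:R.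
Proof.
elim: s => [|x s IH]; first by rewrite big_nil /=; ring.
rewrite big_cons IH /= natrD mulrDr -addn1 natrD; ring.
Qed.

Variable G : groupType.
Variable S : seq G.
Hypothesis Sinv : forall a, a \in S -> (@monoid.inv G a) \in S.
Hypothesis gen : forall g : G, exists w : seq G, all (mem S) w /\ wprod w = g.
Hypothesis Spos : (0 < size S)%N.

Lemma Av_le g : Av R S g <= (wlen S g)%:R + 2.
Proof.
rewrite /Av.
have Hs : 0 < (size S)%:R :> R by rewrite ltr0n.
rewrite ler_pdivrMl // .
apply: (@le_trans _ _ (\sum_(a <- S) ((wlen S g)%:R + 2))).
  rewrite big_seq [X in _ <= X]big_seq; apply: ler_sum => a Ha.
  rewrite -(natrD R (wlen S g) 2) ler_nat.
  exact: (wlen_conj1 Sinv).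
by rewrite sum_const_seq mulr_natl.
Qed.

Lemma Av_ge g : (wlen S g)%:R - 2 <= Av R S g.
Proof.
rewrite /Av.
have Hs : 0 < (size S)%:R :> R by rewrite ltr0n.
rewrite ler_pdivlMl // .
apply: (@le_trans _ _ (\sum_(a <- S) ((wlen S g)%:R - 2))).
  by rewrite sum_const_seq mulr_natl.
rewrite big_seq [X in _ <= X]big_seq; apply: ler_sum => a Ha.
rewrite lerBlDr -(natrD R _ 2) ler_nat.
exact: (wlen_conj2 Sinv).
Qed.

Lemma curv_bound g : `|curv R S g| <= 2 / (wlen S g)%:R.
Proof.
rewrite /curv.
case: (posnP (wlen S g)) => [->|Hp]; first by rewrite invr0 !mulr0 normr0.
have HL : 0 < (wlen S g)%:R :> R by rewrite ltr0n.
rewrite normrM normfV (ger0_norm (ltW HL)).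
apply: ler_wpM2r; first by rewrite invr_ge0 ltW.
have := Av_le g; have := Av_ge g => H1 H2.
rewrite ler_norml; apply/andP; split; lra.
Qed.

Lemma f_bound g (k : nat) :
  2 / (wlen S g)%:R <= 2 * (wlen S g <= k)%N%:R + 2 / (k.+1)%:R :> R.
Proof.
have Hk : 0 < (k.+1)%:R :> R by rewrite ltr0n.
case: (leqP (wlen S g) k) => H /=.
  case: (posnP (wlen S g)) => [->|Hp].
    by rewrite invr0 mulr0 mulr1 addr_ge0 // divr_ge0 // ltW.
  rewrite mulr1 -[X in X <= _]addr0; apply: lerD; last by rewrite divr_ge0 // ltW.
  rewrite ler_pdivrMr ?ltr0n //; rewrite -[X in X <= _]mulr1; apply: ler_wpM2l => //.
  by rewrite ler1n.
rewrite mulr0 add0r; apply: ler_wpM2l => //.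
rewrite lef_pV2 ?posrE ?ltr0n //; first by rewrite ler_nat.
exact: leq_trans H.
Qed.

Hypothesis inf : infinite_group G.

Lemma avg_bound n k :
  `|avg_curv R S n| <= 2 * (size (Defs.ball S k))%:R / (size (Defs.ball S n))%:R + 2 / (k.+1)%:R.
Proof.
rewrite /avg_curv.
set Bn := (size (Defs.ball S n))%:R : R.
set c := 2 / (k.+1)%:R : R.
have Hc : 0 <= c by rewrite /c divr_ge0 // ler0n.
have HBn : 0 < Bn by rewrite /Bn ltr0n; exact: leq_ltn_trans (leq0n n) (ball_size gen inf n).
have H : `|\sum_(g <- Defs.ball S n | g != @monoid.one G) curv R S g|
   <= \sum_(g <- Defs.ball S n) (2 * (wlen S g <= k)%N%:R + c).
  apply: le_trans (ler_norm_sum _ _ _) _.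
  rewrite big_mkcond /=; apply: ler_sum => g _.
  case: ifP => _; last by rewrite addr_ge0 // mulr_ge0 // ler0n.
  exact: le_trans (curv_bound g) (f_bound g k).
rewrite sum_split_count in H.
have Hcnt : (count (fun g => wlen S g <= k)%N (Defs.ball S n) <= size (Defs.ball S k))%N.
  rewrite -size_filter; apply: uniq_leq_size; first by rewrite filter_uniq // ball_uniq.
  move=> x; rewrite mem_filter => /andP[Hx _]; by rewrite (mem_ball gen).
have HBi : 0 <= Bn^-1 by rewrite invr_ge0 ltW.
rewrite normrM (ger0_norm HBi).
apply: le_trans (ler_wpM2l HBi H) _.
rewrite mulrDr; apply: lerD.
  rewrite mulrC; apply: ler_wpM2r; first by rewrite invr_ge0 ltW.
  by apply: ler_wpM2l => //; rewrite ler_nat.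
by rewrite -/Bn mulrC -mulrA mulfV ?mulr1 // gt_eqF.
Qed.

End Real.

Unset Implicit Arguments.

Theorem mainTheorem16 (R : realType) (G : groupType) (S : seq G) :
  infinite_group G -> sym_gen_set S ->
  (fun n : nat => avg_curv R S n) @ \oo --> (0 : R).
Proof.
move=> inf [_ Sinv _ gen].
have Spos := S_nonempty gen inf.
apply/cvgrPdist_lt => eps eps0.
set k := Num.truncn (4 / eps).
have Hk : 4 / eps < (k.+1)%:R :> R by apply: truncnS_gt.
set Bk := (size (Defs.ball S k))%:R : R.
set N := Num.truncn (4 * Bk / eps).
have HN : 4 * Bk / eps < (N.+1)%:R :> R by apply: truncnS_gt.
exists N => // n /= Hn.
rewrite sub0r normrN.
apply: le_lt_trans (avg_bound R Sinv gen Spos inf n k) _.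
have HBn : (N.+1)%:R <= (size (Defs.ball S n))%:R :> R.
  rewrite ler_nat; apply: leq_trans (ball_size gen inf n); by rewrite ltnS.
set Bn := (size (Defs.ball S n))%:R : R.
have Bk0 : 0 <= Bk by rewrite /Bk ler0n.
have Bn0 : 0 < Bn by apply: lt_le_trans HBn; rewrite ltr0n.
have k0 : 0 < (k.+1)%:R :> R by rewrite ltr0n.
have H1 : 2 * Bk / Bn < eps / 2.
  rewrite ltr_pdivrMr //.
  have : 4 * Bk / eps < Bn by apply: lt_le_trans HBn.
  rewrite ltr_pdivrMr // => H; nra.
have H2 : 2 / (k.+1)%:R < eps / 2.
  rewrite ltr_pdivrMr //.
  move: Hk; rewrite ltr_pdivrMr // => H; nra.
rewrite -/Bk [X in _ < X]splitr; exact: ltrD.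
Qed.
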